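(* Let $(E,\rho_\theta)$ be a complete $b_v(\theta)$ metric space and let $S:E\to E$ satisfy $\rho_\theta(Su,Sw)\le\beta\rho_\theta(u,Su)+\gamma\rho_\theta(w,Sw)$ for all $u,w\in E$, where $\beta,\gamma\ge0$ are constants with $\beta+\gamma<1$, and where $\Gamma_1<\frac1{\Gamma_2}$ with $\Gamma_1=\min\{\beta,\gamma\}$ and $\Gamma_2=\max\{\theta(u,Su),\theta(Su,u)\}$ (for all $u\in E$). Then $S$ has a unique fixed point.
   Context: Let $E$ be a nonempty set, $\theta:E\times E\to[1,\infty)$ a function and $v\in\mathbb{N}$. A map $\rho_\theta:E\times E\to[0,\infty)$ is a $b_v(\theta)$ metric (and $(E,\rho_\theta)$ a $b_v(\theta)$ metric space) if for all $u,w\in E$: $\rho_\theta(u,w)=0$ iff $u=w$; $\rho_\theta(u,w)=\rho_\theta(w,u)$; and for all $u,z_1,\dots,z_v,w\in E$ pairwise distinct, $\rho_\theta(u,w)\le\theta(u,w)[\rho_\theta(u,z_1)+\rho_\theta(z_1,z_2)+\dots+\rho_\theta(z_{v-1},z_v)+\rho_\theta(z_v,w)]$. A sequence $\{u_n\}$ converges to $u$ if for every $\varepsilon>0$ there is $n_0$ with $\rho_\theta(u_n,u)<\varepsilon$ for all $n\ge n_0$; it is Cauchy if for every $\varepsilon>0$ there is $n_0$ with $\rho_\theta(u_n,u_{n+p})<\varepsilon$ for all $n\ge n_0$ and $p>0$; the space is complete if every Cauchy sequence converges in $E$. *)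

(* Defs.v *)
From Stdlib Require Import Reals Lra Lia.
Open Scope R_scope.

(* The points u, z_1, ..., z_v, w of the generalized
   triangle inequality are encoded as p 0 = u, p i = z_i (1 <= i <= v),
   p (v+1) = w; the sum  sum_{i=0}^{v} rho (p i) (p (i+1))  is
   rho(u,z_1) + rho(z_1,z_2) + ... + rho(z_v,w). *)
Definition is_bv_metric (E : Type) (theta : E -> E -> R) (v : nat)
  (rho : E -> E -> R) : Prop :=
  (forall u w, 0 <= rho u w) /\
  (forall u w, rho u w = 0 <-> u = w) /\
  (forall u w, rho u w = rho w u) /\
  (forall p : nat -> E,
     (forall i j, (i < j <= S v)%nat -> p i <> p j) ->
     rho (p 0%nat) (p (S v)) <=
       theta (p 0%nat) (p (S v)) * sum_f_R0 (fun i => rho (p i) (p (S i))) v).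

Definition bv_converges (E : Type) (rho : E -> E -> R) (x : nat -> E) (u : E) : Prop :=
  forall eps, 0 < eps -> exists n0 : nat, forall n, (n >= n0)%nat -> rho (x n) u < eps.

Definition bv_cauchy (E : Type) (rho : E -> E -> R) (x : nat -> E) : Prop :=
  forall eps, 0 < eps -> exists n0 : nat, forall n p, (n >= n0)%nat -> (p > 0)%nat ->
    rho (x n) (x (n + p)%nat) < eps.

Definition bv_complete (E : Type) (rho : E -> E -> R) : Prop :=
  forall x : nat -> E, bv_cauchy E rho x -> exists u, bv_converges E rho x u.

(* Main.v *)
Require Import Defs.
From Stdlib Require Import Reals Lra Lia Classical.
Open Scope R_scope.

Theorem mainTheorem12
  (E : Type) (HE : inhabited E) (theta : E -> E -> R) (v : nat)
  (rho : E -> E -> R) (S : E -> E) (beta gamma : R) :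
  (forall u w, 1 <= theta u w) ->
  (1 <= v)%nat ->
  is_bv_metric E theta v rho ->
  bv_complete E rho ->
  0 <= beta -> 0 <= gamma -> beta + gamma < 1 ->
  (forall u w, rho (S u) (S w) <= beta * rho u (S u) + gamma * rho w (S w)) ->
  (forall u, Rmin beta gamma < 1 / Rmax (theta u (S u)) (theta (S u) u)) ->
  exists! u, S u = u.
Proof.
  intros Hth Hv [Hpos [Hz [Hsym Htri]]] Hcomp Hb Hg Hbg Hc Hmin.
  assert (Huniq : forall a b, S a = a -> S b = b -> a = b).
  { intros a b Ha Hb'. apply Hz. pose proof (Hc a b) as H.
    rewrite !Ha, !Hb' in H.
    assert (rho a a = 0) by (apply Hz; reflexivity).
    assert (rho b b = 0) by (apply Hz; reflexivity).
    pose proof (Hpos a b). nra. }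
  assert (Hex : exists u, S u = u).
  2:{ destruct Hex as [u Hu]. exists u. split; [exact Hu|].
      intros w Hw. apply Huniq; auto. }
  destruct HE as [x0].
  set (x := fun n => Nat.iter n S x0).
  assert (HxS : forall n, x (Datatypes.S n) = S (x n)) by reflexivity.
  set (d := fun n => rho (x n) (x (Datatypes.S n))).
  set (k := beta / (1 - gamma)).
  assert (Hk0 : 0 <= k).
  { unfold k. apply Rmult_le_pos; [lra|]. left; apply Rinv_0_lt_compat; lra. }
  assert (Hk1 : k < 1).
  { unfold k. apply (Rmult_lt_reg_r (1 - gamma)); [lra|].
    replace (beta / (1 - gamma) * (1 - gamma)) with beta by (field; lra). lra. }
  assert (Hd0 : forall n, 0 <= d n) by (intro; apply Hpos).
  assert (Hstep : forall n, d (Datatypes.S n) <= k * d n).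
  { intro n. unfold d. rewrite !HxS.
    pose proof (Hc (x n) (S (x n))) as H.
    apply (Rmult_le_reg_r (1 - gamma)); [lra|].
    replace (k * rho (x n) (S (x n)) * (1 - gamma)) with (beta * rho (x n) (S (x n)))
      by (unfold k; field; lra). lra. }
  assert (Hpow : forall n, d n <= k ^ n * d 0%nat).
  { induction n; simpl. lra. pose proof (Hstep n).
    apply Rle_trans with (k * d n); [auto|]. rewrite Rmult_assoc.
    apply Rmult_le_compat_l; auto. }
  assert (Hsmall : forall e, 0 < e -> exists N, forall n, (n >= N)%nat -> d n < e).
  { intros e He.
    destruct (pow_lt_1_zero k ltac:(rewrite Rabs_pos_eq; lra) (e / (d 0%nat + 1)))
      as [N HN].
    { apply Rdiv_lt_0_compat; auto. pose proof (Hd0 0%nat); lra. }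
    exists N. intros n Hn. specialize (HN n Hn). rewrite Rabs_pos_eq in HN
      by (apply pow_le; auto).
    pose proof (Hpow n). pose proof (Hd0 0%nat).
    assert (k ^ n * (d 0%nat + 1) < e).
    { apply (Rmult_lt_compat_r (d 0%nat + 1)) in HN; [|lra].
      replace (e / (d 0%nat + 1) * (d 0%nat + 1)) with e in HN by (field; lra). lra. }
    assert (0 <= k ^ n) by (apply pow_le; auto). nra. }
  destruct (classic (exists n, S (x n) = x n)) as [[n Hn]|Hnf].
  { exists (x n); auto. }
  assert (Hdpos : forall n, 0 < d n).
  { intro n. destruct (Hd0 n) as [H|H]; auto. exfalso. apply Hnf. exists n.
    symmetry in H. apply Hz in H. rewrite <- HxS. symmetry; exact H. }
  assert (Hmono : forall a b, (a <= b)%nat -> d b <= d a).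
  { intros a b Hab. induction Hab. lra. pose proof (Hstep m). pose proof (Hd0 m).
    nra. }
  assert (Hdist : forall a b, (a < b)%nat -> x a <> x b).
  { intros a b Hab Heq. assert (d a = d b).
    { unfold d. rewrite !HxS, Heq. reflexivity. }
    pose proof (Hmono (Datatypes.S a) b Hab). pose proof (Hstep a).
    pose proof (Hdpos a). nra. }
  assert (Hfar : forall y, exists A, forall j, (j >= A)%nat -> x j <> y).
  { intro y. destruct (classic (exists j, x j = y)) as [[j Hj]|Hn].
    - exists (Datatypes.S j). intros i Hi Heq. apply (Hdist j i); [lia|]. congruence.
    - exists 0%nat. intros i _ Heq. apply Hn. eauto. }
  assert (Hcau : bv_cauchy E rho x).
  { intros eps Heps. destruct (Hsmall eps Heps) as [N HN]. exists (Datatypes.S N).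
    intros n p Hn Hp.
    replace n with (Datatypes.S (n - 1)) by lia.
    replace (Datatypes.S (n - 1) + p)%nat with (Datatypes.S (n - 1 + p)) by lia.
    pose proof (Hc (x (n - 1)%nat) (x (n - 1 + p)%nat)) as H.
    rewrite <- !HxS in H. fold (d (n-1)%nat) in H. fold (d (n - 1 + p)%nat) in H.
    pose proof (HN (n-1)%nat ltac:(lia)). pose proof (HN (n-1+p)%nat ltac:(lia)).
    pose proof (Hd0 (n-1)%nat). pose proof (Hd0 (n-1+p)%nat).
    assert (beta * d (n-1)%nat <= beta * eps) by (apply Rmult_le_compat_l; lra).
    assert (gamma * d (n-1+p)%nat <= gamma * eps) by (apply Rmult_le_compat_l; lra).
    nra. }
  destruct (Hcomp x Hcau) as [u Hu].
  exists u. apply NNPP. intro Hne.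
  set (D := rho u (S u)).
  assert (HD : 0 < D).
  { destruct (Hpos u (S u)) as [H|H]; auto. exfalso. apply Hne.
    symmetry in H. apply Hz in H. auto. }
  set (th := theta u (S u)).
  set (m := Rmin beta gamma).
  assert (Hth1 : 1 <= th) by apply Hth.
  assert (Hm0 : 0 <= m) by (unfold m, Rmin; destruct Rle_dec; lra).
  assert (Hthm : th * m < 1).
  { pose proof (Hmin u) as H. fold m th in H.
    set (M := Rmax th (theta (S u) u)) in H.
    assert (th <= M) by apply Rmax_l.
    apply (Rmult_lt_compat_r M) in H; [|lra].
    replace (1 / M * M) with 1 in H by (field; lra). nra. }
  destruct v as [|v']; [lia|].
  set (V := INR (Datatypes.S v')).
  assert (HV : 0 <= V) by apply pos_INR.
  set (e := (1 - th * m) * D / (2 * th * (V + 1))).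
  assert (He : 0 < e).
  { unfold e. apply Rdiv_lt_0_compat. nra. nra. }
  destruct (Hsmall e He) as [N1 HN1].
  destruct (Hu e He) as [N2 HN2].
  destruct (Hfar u) as [A1 HA1].
  destruct (Hfar (S u)) as [A2 HA2].
  set (n := (1 + N1 + N2 + A1 + A2)%nat).
  set (p := fun i => match i with
                     | 0%nat => u
                     | _ => if Nat.leb i (Datatypes.S v') then x (n + i - 1)%nat else S u
                     end).
  assert (Hp : forall i j, (i < j <= Datatypes.S (Datatypes.S v'))%nat -> p i <> p j).
  { intros i j Hij. unfold p. destruct i as [|i]; destruct j as [|j]; try lia.
    - destruct (Nat.leb (Datatypes.S j) (Datatypes.S v')) eqn:E1.
      + intro H. symmetry in H. apply (HA1 (n + Datatypes.S j - 1)%nat); auto; lia.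
      + intro H. apply Hne. auto.
    - destruct (Nat.leb (Datatypes.S i) (Datatypes.S v')) eqn:E1;
      destruct (Nat.leb (Datatypes.S j) (Datatypes.S v')) eqn:E2.
      + apply Hdist. lia.
      + apply (HA2 (n + Datatypes.S i - 1)%nat). lia.
      + apply Nat.leb_gt in E1. apply Nat.leb_le in E2. lia.
      + apply Nat.leb_gt in E1. lia. }
  pose proof (Htri p Hp) as HT.
  assert (Hp0 : p 0%nat = u) by reflexivity.
  assert (HpS : p (Datatypes.S (Datatypes.S v')) = S u).
  { unfold p. replace (Nat.leb (Datatypes.S (Datatypes.S v')) (Datatypes.S v')) with false.
    reflexivity. symmetry. apply Nat.leb_gt. lia. }
  rewrite Hp0, HpS in HT. fold th D in HT.
  rewrite tech5 in HT.
  assert (Hfirst : sum_f_R0 (fun i => rho (p i) (p (Datatypes.S i))) v' <=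
                   sum_f_R0 (fun _ => e) v').
  { apply sum_Rle. intros i Hi. unfold p at 2.
    rewrite (proj2 (Nat.leb_le (Datatypes.S i) (Datatypes.S v'))) by lia.
    destruct i as [|i].
    - simpl p. rewrite Hsym. left. apply HN2. lia.
    - unfold p. rewrite (proj2 (Nat.leb_le (Datatypes.S i) (Datatypes.S v'))) by lia.
      replace (n + Datatypes.S (Datatypes.S i) - 1)%nat
        with (Datatypes.S (n + Datatypes.S i - 1)) by lia.
      left. apply HN1. lia. }
  rewrite sum_cte in Hfirst. fold V in Hfirst.
  assert (Hlast : rho (p (Datatypes.S v')) (p (Datatypes.S (Datatypes.S v'))) <= m * D + e).
  { rewrite HpS. unfold p. destruct v' as [|w].
    - simpl Nat.leb. cbv iota.
      set (j := (n + 1 - 1)%nat).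
      replace j with (Datatypes.S (j - 1)) by (unfold j, n; lia).
      pose proof (Hc (x (j - 1)%nat) u) as H1.
      pose proof (Hc u (x (j - 1)%nat)) as H2. rewrite Hsym in H2.
      rewrite <- HxS in H1, H2. fold (d (j-1)%nat) in H1, H2. fold D in H1, H2.
      pose proof (HN1 (j - 1)%nat ltac:(unfold j, n; lia)).
      pose proof (Hd0 (j-1)%nat).
      assert (beta * d (j-1)%nat <= beta * e) by (apply Rmult_le_compat_l; lra).
      assert (gamma * d (j-1)%nat <= gamma * e) by (apply Rmult_le_compat_l; lra).
      assert (beta * e <= e) by nra. assert (gamma * e <= e) by nra.
      unfold m, Rmin; destruct Rle_dec; nra.
    - rewrite (proj2 (Nat.leb_le (Datatypes.S (Datatypes.S w)) (Datatypes.S (Datatypes.S w)))) by lia.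
      set (j := (n + Datatypes.S (Datatypes.S w) - 1)%nat).
      replace j with (Datatypes.S (j - 1)) by (unfold j, n; lia).
      pose proof (Hc (x (j - 1)%nat) u) as H1.
      pose proof (Hc u (x (j - 1)%nat)) as H2. rewrite Hsym in H2.
      rewrite <- HxS in H1, H2. fold (d (j-1)%nat) in H1, H2. fold D in H1, H2.
      pose proof (HN1 (j - 1)%nat ltac:(unfold j, n; lia)).
      pose proof (Hd0 (j-1)%nat).
      assert (beta * d (j-1)%nat <= beta * e) by (apply Rmult_le_compat_l; lra).
      assert (gamma * d (j-1)%nat <= gamma * e) by (apply Rmult_le_compat_l; lra).
      assert (beta * e <= e) by nra. assert (gamma * e <= e) by nra.
      unfold m, Rmin; destruct Rle_dec; nra. }
  assert (Hsum : D <= th * (e * V + (m * D + e))).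
  { eapply Rle_trans; [exact HT|]. apply Rmult_le_compat_l; lra. }
  assert (Heq : th * (e * (V + 1)) = (1 - th * m) * D / 2).
  { unfold e. field. split; lra. }
  assert (th * (e * V + (m * D + e)) = th * (e * (V + 1)) + th * m * D) by ring.
  nra.
Qed.
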